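(* Let $S$ be an intra-regular $\Gamma$-AG$^{**}$-groupoid and $A\subseteq S$. Then $A$ is a left $\Gamma$-ideal of $S$ if and only if $A$ is a right $\Gamma$-ideal of $S$.
   Context: Let $S$ and $\Gamma$ be nonempty sets with a map $S\times\Gamma\times S\to S$, $(x,\gamma,y)\mapsto x\gamma y$. $S$ is a $\Gamma$-AG-groupoid if $(x\gamma y)\delta z=(z\gamma y)\delta x$ for all $x,y,z\in S$, $\gamma,\delta\in\Gamma$; it is a $\Gamma$-AG$^{**}$-groupoid if moreover $a\alpha(b\beta c)=b\alpha(a\beta c)$ for all $a,b,c\in S$, $\alpha,\beta\in\Gamma$. For subsets $A,B\subseteq S$, $A\Gamma B=\{a\gamma b: a\in A,\gamma\in\Gamma,b\in B\}$. $S$ is intra-regular if for every $a\in S$ there exist $x,y\in S$ and $\beta,\gamma,\delta\in\Gamma$ with $a=(x\beta(a\delta a))\gamma y$. A nonempty subset $A$ is a left (right) $\Gamma$-ideal if $S\Gamma A\subseteq A$ ($A\Gamma S\subseteq A$). *)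

(* Defs.v *)
Definition GammaAG {S G : Type} (op : S -> G -> S -> S) : Prop :=
  forall (x y z : S) (g d : G), op (op x g y) d z = op (op z g y) d x.

Definition GammaAGss {S G : Type} (op : S -> G -> S -> S) : Prop :=
  GammaAG op /\
  forall (a b c : S) (al be : G), op a al (op b be c) = op b al (op a be c).

Definition intra_regular {S G : Type} (op : S -> G -> S -> S) : Prop :=
  forall a : S, exists (x y : S) (be ga de : G),
    a = op (op x be (op a de a)) ga y.

Definition left_Gamma_ideal {S G : Type} (op : S -> G -> S -> S) (A : S -> Prop) : Prop :=
  (exists a, A a) /\ forall (s : S) (g : G) (a : S), A a -> A (op s g a).

Definition right_Gamma_ideal {S G : Type} (op : S -> G -> S -> S) (A : S -> Prop) : Prop :=
  (exists a, A a) /\ forall (a : S) (g : G) (s : S), A a -> A (op a g s).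

(* Main.v *)
Require Import Defs.

Theorem mainTheorem4 (S G : Type) (op : S -> G -> S -> S)
  (hS : inhabited S) (hG : inhabited G)
  (hAG : GammaAGss op) (hIR : intra_regular op) (A : S -> Prop) :
  left_Gamma_ideal op A <-> right_Gamma_ideal op A.
Proof.
  destruct hAG as [hA hB].
  split; intros [hne H]; split; try exact hne.
  - intros a g s Ha.
    destruct (hIR a) as [x [y [be [ga [de E]]]]].
    assert (K : op a g s = op (op s ga y) g (op x be (op a de a))).
    { pattern a at 1; rewrite E. apply hA. }
    rewrite K. apply H. apply H. apply H. exact Ha.
  - intros s g a Ha.
    destruct (hIR a) as [x [y [be [ga [de E]]]]].
    assert (K : op s g a = op (op a be (op x de a)) g (op s ga y)).
    { pattern a at 1; rewrite E. rewrite hB. rewrite (hB x a a). reflexivity. }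
    rewrite K. apply H. apply H. exact Ha.
Qed.
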